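(* Let $G$ be a group with identity $e$, $A$ a set with at least two elements, $\tau: A^G\to A^G$ a lazy cellular automaton, and $n\in\mathbb{Z}_+$. Then \[\mathrm{ord}(\tau) > n \iff \tau^{j-1}\neq \tau^{j} \text{ for all } j \in \{1, \ldots, n\}. \] Furthermore, $\mathrm{ord}(\tau) = \min\{n\geq 2: \tau^{n-1}=\tau^n\}$.
   Context: $A^G$ is the set of maps $G \to A$ with shift action $(g\cdot x)(h) := x(hg)$. A cellular automaton is a map $\tau : A^G \to A^G$ with a finite $S \subseteq G$ and $\mu : A^S \to A$ such that $\tau(x)(g) = \mu((g\cdot x)|_S)$. $\tau$ is lazy if there is such a local defining map $\mu : A^S \to A$ with $e \in S$ and $p \in A^S$ such that for all $z \in A^S$: $\mu(z) = z(e)$ iff $z \neq p$. $\tau^k$ is the $k$-fold composition, $\tau^0$ the identity; $\mathrm{ord}(\tau) := |\{\tau^k : k \in \mathbb{N}\}|$ with $\mathbb{N}=\{0,1,2,\dots\}$ (possibly infinite; the minimum of the empty set is read as $\infty$). *)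

(* Defs.v *)
From HB Require Import structures.
From mathcomp Require Import all_boot.
From mathcomp Require Import monoid.
From mathcomp Require Import boolp classical_sets cardinality.
Unset Printing Implicit Defensive.
Local Open Scope classical_set_scope.

Section CA.
Variables (G : groupType) (A : Type).

Definition shift (g : G) (x : G -> A) : G -> A := fun h => x (monoid.mul h g).

Definition restr (S : set G) (x : G -> A) : {s : G | S s} -> A :=
  fun s => x (proj1_sig s).

Definition local_defining_map (tau : (G -> A) -> (G -> A)) (S : set G)
  (mu : ({s : G | S s} -> A) -> A) : Prop :=
  forall (x : G -> A) (g : G), tau x g = mu (restr S (shift g x)).

Definition cellular_automaton (tau : (G -> A) -> (G -> A)) : Prop :=
  exists (S : set G) (mu : ({s : G | S s} -> A) -> A),
    finite_set S /\ local_defining_map tau S mu.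

Definition lazy_ca (tau : (G -> A) -> (G -> A)) : Prop :=
  exists (S : set G) (mu : ({s : G | S s} -> A) -> A) (he : S (monoid.one : G))
         (p : {s : G | S s} -> A),
    finite_set S /\ local_defining_map tau S mu /\
    forall z : {s : G | S s} -> A, mu z = z (exist _ (monoid.one : G) he) <-> z <> p.

End CA.
Arguments shift {G A}.
Arguments restr {G A}.
Arguments local_defining_map {G A}.
Arguments cellular_automaton {G A}.
Arguments lazy_ca {G A}.

Definition powers {T : Type} (tau : T -> T) : set (T -> T) :=
  [set iter k tau | k in [set: nat]].

(* ord(tau) := |{tau^k : k in N}| in N \cup {oo}; None encodes oo *)
Definition ord {T : Type} (tau : T -> T) : option nat :=
  match pselect (finite_set (powers tau)) with
  | left h => Some (projT1 (cid h))
  | right _ => None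
  end.

Definition ext_gt (o : option nat) (n : nat) : Prop :=
  match o with Some m => (n < m)%N | None => True end.

(* min of a set of naturals, with min of the empty set = oo (None) *)
Definition nat_min (P : nat -> Prop) : option nat :=
  match pselect (exists n, P n) with
  | left h => Some (ex_minn (let: ex_intro n hn := h in
                    ex_intro (fun n => `[< P n >]) n (asboolT hn)))
  | right _ => None
  end.

(* Main.v *)
Require Import Defs.
From HB Require Import structures.
From mathcomp Require Import all_boot.
From mathcomp Require Import monoid.
From mathcomp Require Import boolp classical_sets cardinality.

Local Open Scope classical_set_scope.
Local Open Scope card_scope.

Section Lazy.
Variables (G : groupType) (A : Type) (tau : (G -> A) -> (G -> A)).
Variables (S : set G) (mu : ({s : G | S s} -> A) -> A) (he : S (monoid.one : G))
  (p : {s : G | S s} -> A).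
Hypothesis hloc : local_defining_map tau S mu.
Hypothesis hmu : forall z : {s : G | S s} -> A,
  mu z = z (exist _ (monoid.one : G) he) <-> z <> p.

Let e := exist S (monoid.one : G) he.

Lemma pat (x : G -> A) g : restr S (shift g x) e = x g.
Proof. by rewrite /restr /shift /= mul1g. Qed.

Lemma mup : mu p <> p e.
Proof. by move=> h; have /hmu := h. Qed.

Lemma change (x : G -> A) g : tau x g <> x g -> x g = p e /\ tau x g = mu p.
Proof.
move=> h.
have hp : restr S (shift g x) = p.
  apply: contrapT => hn; apply: h; rewrite hloc; move/hmu: hn => ->.
  exact: pat.
by rewrite hloc -(pat x g) hp.
Qed.

Lemma stay (x : G -> A) g : x g = mu p -> tau x g = mu p.
Proof.
move=> h; apply: contrapT => hn.
have [h1 _] := change x g ltac:(by rewrite h).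
by apply: mup; rewrite -h1.
Qed.

Lemma periodic (z : G -> A) k : (0 < k)%N -> iter k tau z = z -> tau z = z.
Proof.
move=> k0 hk; apply: funext => g; apply: contrapT => hn.
have [h1 h2] := change z g hn.
have hm : forall m, iter m.+1 tau z g = mu p.
  elim=> [|m IH] //=. exact: stay.
move: hk; case: k k0 => // k _ hk.
by apply: mup; rewrite -h1 -(hm k) hk.
Qed.

Lemma noperiod i k : (0 < k)%N -> iter i tau = iter (i + k) tau ->
  iter i tau = iter i.+1 tau.
Proof.
move=> k0 h; apply: funext => x /=.
have hz : iter k tau (iter i tau x) = iter i tau x.
  by rewrite -iterD addnC -h.
by rewrite (periodic _ _ k0 hz).
Qed.

Lemma tau_ne_id : iter 0 tau <> iter 1 tau.
Proof.
pose x : G -> A := fun h => match pselect (S h) with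
  | left hs => p (exist _ h hs) | right _ => p e end.
have hx : restr S (shift monoid.one x) = p.
  apply: funext => -[s hs]; rewrite /restr /shift /= mulg1 /x.
  case: pselect => [hs'|//].
  by congr p; congr exist; apply: Prop_irrelevance.
move=> h; have := congr1 (fun f => f x monoid.one) h => /=.
rewrite hloc hx -(pat x) hx => /esym; exact: mup.
Qed.

End Lazy.

Theorem corollary2 (G : groupType) (A : Type) (tau : (G -> A) -> (G -> A)) :
  (exists a b : A, a <> b) ->
  lazy_ca tau ->
  (forall n : nat, (0 < n)%N ->
     (ext_gt (ord tau) n <->
      (forall j : nat, (1 <= j <= n)%N -> iter j.-1 tau <> iter j tau))) /\
  ord tau = nat_min (fun m => (2 <= m)%N /\ iter m.-1 tau = iter m tau).
Proof.
move=> _ [S [mu [he [p [_ [hloc hmu]]]]]].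
have NP := @noperiod _ _ _ _ _ _ _ hloc hmu.
have N01 := @tau_ne_id _ _ _ _ _ _ _ hloc hmu.
pose Q m := (1 <= m)%N /\ iter m.-1 tau = iter m tau.
have F1 : forall i j, (i < j)%N -> iter i tau = iter j tau -> Q i.+1.
  move=> i j ij h; split => //=.
  apply: (NP i (j - i)); first by rewrite subn_gt0.
  by rewrite subnKC // ltnW.
have Q1 : ~ Q 1 by move=> [_ /= h]; exact: N01.
case: (pselect (exists m, Q m)) => [hex|hnex].
- have hex' : exists m, `[< Q m >] by case: hex => m hm; exists m; exact/asboolP.
  case: (ex_minnP hex') => N /asboolP QN minN.
  have minN' : forall m, Q m -> (N <= m)%N by move=> m /asboolP; exact: minN.
  have N2 : (2 <= N)%N.
    case: N QN {minN minN'} => [[]//|[|N]] // QN; by [].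
  have F2 : forall k, (N.-1 <= k)%N -> iter k tau = iter N.-1 tau.
    elim=> [|k IH]; first by rewrite leqn0 => /eqP ->.
    rewrite leq_eqVlt => /orP[/eqP <- //|hk].
    apply: funext => x; rewrite iterS IH // -iterS.
    by case: QN => _; rewrite prednK ?(leq_trans _ N2) // => ->.
  have hpow : powers tau = (fun k => iter k tau) @` `I_N.
    apply/seteqP; split => f.
      case=> k _ <-; case: (ltnP k N) => hk; first by exists k.
      exists N.-1; first by rewrite /= prednK // ltnW.
      by rewrite F2 // (leq_trans _ hk) // leq_pred.
    by case=> k _ <-; exists k.
  have hinj : {in `I_N &, injective (fun k => iter k tau)}.
    move=> i j; rewrite !in_setE /= => hi hj h.
    case: (ltngtP i j) => // ij.
      by have := minN' _ (F1 _ _ ij h); rewrite leqNgt (leq_ltn_trans ij hj).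
    by have := minN' _ (F1 _ _ ij (esym h)); rewrite leqNgt (leq_ltn_trans ij hi).
  have hcard : powers tau #= `I_N by rewrite hpow; exact: inj_card_eq.
  have hord : ord tau = Some N.
    rewrite /ord; case: pselect => [h|h]; last by exfalso; apply: h; exists N.
    case: (cid h) => m hm /=; congr Some; apply/esym/card_eq_II.
    exact: card_eq_trans (card_esym hcard) hm.
  split.
    move=> n n0; rewrite hord /=; split.
      move=> nN j /andP[j1 jn] h.
      by have := minN' j (conj j1 h); rewrite leqNgt (leq_ltn_trans jn nN).
    move=> H; rewrite ltnNge; apply/negP => Nn.
    by case: QN => N1 h; apply: (H N) => //; rewrite N1 Nn.
  rewrite hord /nat_min; case: pselect => [h|h]; last first.
    by exfalso; apply: h; exists N; split => //; case: QN.
  case: ex_minnP => m /asboolP [m2 hm] minm; congr Some; apply/eqP.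
  rewrite eqn_leq; apply/andP; split.
    exact: minN' _ (conj (ltnW m2) hm).
  by apply: minm; apply/asboolP; split => //; case: QN.
- have hinj : forall i j, iter i tau = iter j tau -> i = j.
    move=> i j h; case: (ltngtP i j) => // ij; exfalso; apply: hnex.
      by exists i.+1; exact: F1 _ _ ij h.
    by exists j.+1; exact: F1 _ _ ij (esym h).
  have hord : ord tau = None.
    rewrite /ord; case: pselect => [h|//]; exfalso.
    move/finite_setPn: h; apply.
    have : (fun k => iter k tau) @` [set: nat] #= [set: nat].
      by apply: inj_card_eq => i j _ _; exact: hinj.
    move=> /card_esym; rewrite card_eq_le => /andP[+ _].
    by have -> : (fun k => iter k tau) @` [set: nat] = powers tau by [].
  split.
    move=> n n0; rewrite hord /=; split => // _ j /andP[j1 _] h.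
    by apply: hnex; exists j.
  rewrite hord /nat_min; case: pselect => // -[m [m2 hm]].
  by exfalso; apply: hnex; exists m; split => //; exact: ltnW.
Qed.
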